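(* Fix $x>0$, $t>0$, and $v\in(0,1]$, and let $a(y)=1-ve^{-y}$ for $y\in\mathbb{R}$. Then the function $y\mapsto a(x-y)\exp(-vte^{-y})$ is unimodal on $\mathbb{R}$ with maximum at $$y^*=\log\left(-vt+\sqrt{v^2t^2+4te^{x}}\right)-\log 2.$$ Moreover, for any fixed $A>0$, the function $y\mapsto a(y)[1+A\,a(x-y)]$ is unimodal on $\mathbb{R}$ with maximum at $y^*=[x+\log(1+A^{-1})]/2$. *)

(* Defs.v *)
From Stdlib Require Import Reals.
Open Scope R_scope.

Definition a_fun (v y : R) : R := 1 - v * exp (- y).

Definition unimodal_at (f : R -> R) (c : R) : Prop :=
  (forall y1 y2, y1 < y2 -> y2 <= c -> f y1 < f y2) /\
  (forall y1 y2, c <= y1 -> y1 < y2 -> f y2 < f y1).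

(* Main.v *)
Require Import Defs.
From Stdlib Require Import Reals Lra.
From Coquelicot Require Import Coquelicot.
Open Scope R_scope.

Lemma incr_deriv (f f' : R -> R) (c : R) :
  (forall y, derivable_pt_lim f y (f' y)) -> (forall y, y < c -> 0 < f' y) ->
  forall y1 y2, y1 < y2 -> y2 <= c -> f y1 < f y2.
Proof.
  intros Hd Hp y1 y2 H12 H2.
  destruct (MVT_cor2 f f' y1 y2 H12 (fun z _ => Hd z)) as [z [Hz1 Hz2]].
  assert (0 < f' z) by (apply Hp; lra).
  assert (0 < f' z * (y2 - y1)) by (apply Rmult_lt_0_compat; lra).
  lra.
Qed.

Lemma decr_deriv (f f' : R -> R) (c : R) :
  (forall y, derivable_pt_lim f y (f' y)) -> (forall y, c < y -> f' y < 0) ->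
  forall y1 y2, c <= y1 -> y1 < y2 -> f y2 < f y1.
Proof.
  intros Hd Hp y1 y2 H1 H12.
  destruct (MVT_cor2 f f' y1 y2 H12 (fun z _ => Hd z)) as [z [Hz1 Hz2]].
  assert (0 < - f' z) by (assert (f' z < 0) by (apply Hp; lra); lra).
  assert (0 < - f' z * (y2 - y1)) by (apply Rmult_lt_0_compat; lra).
  lra.
Qed.

Theorem lemma1 (x t v : R) (hx : 0 < x) (ht : 0 < t) (hv0 : 0 < v) (hv1 : v <= 1) :
  unimodal_at (fun y => a_fun v (x - y) * exp (- (v * t * exp (- y))))
    (ln (- (v * t) + sqrt (v ^ 2 * t ^ 2 + 4 * t * exp x)) - ln 2) /\
  (forall A : R, 0 < A ->
     unimodal_at (fun y => a_fun v y * (1 + A * a_fun v (x - y)))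
       ((x + ln (1 + / A)) / 2)).
Proof.
  unfold unimodal_at, a_fun.
  assert (He : 0 < exp x) by apply exp_pos.
  split.
  - set (s := sqrt (v ^ 2 * t ^ 2 + 4 * t * exp x)).
    set (us := (- (v * t) + s) / 2).
    assert (Hs2 : s * s = v ^ 2 * t ^ 2 + 4 * t * exp x).
    { unfold s; apply sqrt_sqrt; nra. }
    assert (Hs0 : 0 <= s) by (unfold s; apply sqrt_pos).
    assert (Hvs : v * t < s) by nra.
    assert (Hus : 0 < us) by (unfold us; lra).
    assert (Hc : ln (- (v * t) + s) - ln 2 = ln us).
    { unfold us; rewrite ln_div; lra. }
    rewrite Hc.
    assert (Hq : us * us + v * t * us = t * exp x) by (unfold us; nra).
    set (df := fun y => - (v * (- - (1) * exp (- (x + - y)))) * exp (- (v * t * exp (- y))) +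
      (1 + - (v * exp (- (x + - y)))) *
      (- (v * t * (- (1) * exp (- y))) * exp (- (v * t * exp (- y))))).
    assert (Hd : forall y, derivable_pt_lim
       (fun y => (1 - v * exp (- (x - y))) * exp (- (v * t * exp (- y)))) y (df y)).
    { intro y; apply is_derive_Reals; unfold df; auto_derive; [exact I|ring]. }
    assert (Hform : forall y, df y =
       v * exp (- (v * t * exp (- y))) / (exp x * exp y) *
       ((us - exp y) * (us + exp y + v * t))).
    { intro y. unfold df.
      assert (E1 : exp (- (x + - y)) = exp y / exp x).
      { rewrite Ropp_plus_distr, Ropp_involutive, Rplus_comm, exp_plus, exp_Ropp. field. lra. }
      assert (E2 : exp (- y) = / exp y) by apply exp_Ropp.
      assert (Hy : 0 < exp y) by apply exp_pos.
      rewrite E1, E2.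
      set (E := exp (- (v * t * / exp y))).
      set (u := exp y) in *.
      replace ((us - u) * (us + u + v * t)) with (t * exp x - v * t * u - u * u) by nra.
      field. lra. }
    assert (Hpos : forall y, 0 < v * exp (- (v * t * exp (- y))) / (exp x * exp y)).
    { intro y. pose proof (exp_pos y). pose proof (exp_pos (- (v * t * exp (- y)))).
      apply Rdiv_lt_0_compat; [nra|nra]. }
    split.
    + apply (incr_deriv _ df); [exact Hd|].
      intros y Hy. rewrite Hform. apply Rmult_lt_0_compat; [apply Hpos|].
      assert (exp y < us) by (rewrite <- (exp_ln us Hus); apply exp_increasing; lra).
      pose proof (exp_pos y). apply Rmult_lt_0_compat; nra.
    + apply (decr_deriv _ df); [exact Hd|].
      intros y Hy. rewrite Hform.
      assert (us < exp y) by (rewrite <- (exp_ln us Hus); apply exp_increasing; lra).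
      pose proof (exp_pos y). pose proof (Hpos y).
      assert (0 < (exp y - us) * (us + exp y + v * t)) by (apply Rmult_lt_0_compat; nra).
      nra.
  - intros A HA.
    set (df := fun y => - (v * (- (1) * exp (- y))) * (1 + A * (1 + - (v * exp (- (x + - y))))) +
      (1 + - (v * exp (- y))) * (A * - (v * (- - (1) * exp (- (x + - y)))))).
    assert (Hd : forall y, derivable_pt_lim
       (fun y => (1 - v * exp (- y)) * (1 + A * (1 - v * exp (- (x - y))))) y (df y)).
    { intro y; apply is_derive_Reals; unfold df; auto_derive; [exact I|ring]. }
    assert (Hform : forall y, df y =
       v / (exp x * exp y) * ((1 + A) * exp x - A * (exp y * exp y))).
    { intro y. unfold df.
      assert (E1 : exp (- (x + - y)) = exp y / exp x).
      { rewrite Ropp_plus_distr, Ropp_involutive, Rplus_comm, exp_plus, exp_Ropp. field. lra. }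
      assert (E2 : exp (- y) = / exp y) by apply exp_Ropp.
      assert (Hy : 0 < exp y) by apply exp_pos.
      rewrite E1, E2. field. lra. }
    assert (Hpos : forall y, 0 < v / (exp x * exp y)).
    { intro y. pose proof (exp_pos y). apply Rdiv_lt_0_compat; nra. }
    assert (Hk : forall y, exp y * exp y < exp (x + ln (1 + / A)) <-> y < (x + ln (1 + / A)) / 2).
    { intro y. rewrite <- exp_plus. split; intro H.
      - apply exp_lt_inv in H; lra.
      - apply exp_increasing; lra. }
    assert (HA1 : 0 < 1 + / A) by (pose proof (Rinv_0_lt_compat A HA); lra).
    assert (Hx : exp (x + ln (1 + / A)) = exp x * (1 + / A)).
    { rewrite exp_plus, exp_ln; auto. }
    rewrite Hx in Hk.
    split.
    + apply (incr_deriv _ df); [exact Hd|].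
      intros y Hy. rewrite Hform. apply Rmult_lt_0_compat; [apply Hpos|].
      apply Hk in Hy.
      assert (A * (exp y * exp y) < A * (exp x * (1 + / A))) by (apply Rmult_lt_compat_l; lra).
      replace (A * (exp x * (1 + / A))) with ((1 + A) * exp x) in H by (field; lra).
      lra.
    + apply (decr_deriv _ df); [exact Hd|].
      intros y Hy. rewrite Hform.
      assert (Hy' : exp x * (1 + / A) < exp y * exp y).
      { destruct (Rle_lt_dec (exp y * exp y) (exp x * (1 + / A))) as [h|h]; [|exact h].
        destruct (Rle_lt_or_eq_dec _ _ h) as [h'|h'].
        - apply Hk in h'; lra.
        - exfalso. rewrite <- exp_plus, <- Hx in h'. apply exp_inv in h'. lra. }
      assert (A * (exp x * (1 + / A)) < A * (exp y * exp y)) by (apply Rmult_lt_compat_l; lra).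
      replace (A * (exp x * (1 + / A))) with ((1 + A) * exp x) in H by (field; lra).
      pose proof (Hpos y).
      assert (0 < v / (exp x * exp y) * (A * (exp y * exp y) - (1 + A) * exp x)) by (apply Rmult_lt_0_compat; lra).
      lra.
Qed.
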